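(* Let $k=\mathbb{F}_q$ with $q=2^m\geq 4$ and $n\geq 1$. Suppose $\sigma\in\mathrm{PGL}_{n+1}(k)$ induces a permutation of $\mathbb{P}^n(k)$ of order $2^r$, and for $i=0,\dots,r$ let $c_i$ be the number of $2^i$-cycles in its cycle decomposition (so $c_0$ is the number of fixed points). Then $c_0$ is odd and $c_1+\cdots+c_r$ is even. Moreover, if $n=1$, then exactly one of the following holds: (1) $c_0=q+1$ and $c_i=0$ for all $1\leq i\leq r$ (i.e. $\sigma$ acts as the identity); (2) $c_0=1$ and there is a unique $1\leq j\leq r$ with $c_j\neq 0$, and this $c_j$ equals $q/2^j>1$. *)

(* Defs.v *)
From HB Require Import structures.
From mathcomp Require Import all_boot all_order all_algebra all_field.
Set Implicit Arguments. Unset Strict Implicit. Unset Printing Implicit Defensive.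
Import GRing.Theory.
Local Open Scope ring_scope.

(* Projective space P^(k-1)(F) (use k = n.+1 for P^n): its points are the
   lines (1-dimensional subspaces) of the row space 'rV[F]_k, each line
   represented as the finite set of its vectors. *)
Definition proj_points (F : finFieldType) (k : nat) : {set {set 'rV[F]_k}} :=
  [set S | [exists v : 'rV[F]_k, (v != 0) && (S == [set a *: v | a : F])]].

(* The map on lines induced by a matrix A (acting on row vectors);
   for A invertible this is the permutation of P^(k-1)(F) induced by the
   class of A in PGL_k(F). *)
Definition proj_map (F : finFieldType) (k : nat) (A : 'M[F]_k)
  (S : {set 'rV[F]_k}) : {set 'rV[F]_k} := [set v *m A | v in S].

Definition is_perm_order (T : finType) (P : {set T}) (f : T -> T) (t : nat) : Prop :=
  (0 < t)%N /\ (forall x, x \in P -> iter t f x = x) /\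
  (forall s, (0 < s < t)%N -> exists x, x \in P /\ iter s f x <> x).

Definition cycle_count (T : finType) (P : {set T}) (f : T -> T) (l : nat) : nat :=
  #|[set [set y in P | fconnect f x y] | x in P & order f x == l]|.

(* Main.v *)
Require Import Defs.
From HB Require Import structures.
From mathcomp Require Import all_boot all_order all_algebra all_field.
From mathcomp Require Import zify.
Set Implicit Arguments. Unset Strict Implicit. Unset Printing Implicit Defensive.
Lemma sq1 (q : nat) : 1 < q -> q.+1 * (q - 1) = q * q - 1.
Proof. move=> h; rewrite mulnBr muln1 mulSn; lia. Qed.
Lemma cancelq {q x y : nat} : 1 < q -> x * (q - 1) = y * (q - 1) -> x = y.
Proof. by move=> h /eqP; rewrite eqn_pmul2r ?subn_gt0 // => /eqP. Qed.
Lemma E2 (q x : nat) : 1 < q -> x * (q - 1) = q * q - 1 -> x = q.+1.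
Proof. by move=> h e; apply: (cancelq h); rewrite e sq1. Qed.
Lemma E1 (q x : nat) : 1 < q -> x * (q - 1) = q - 1 -> x = 1.
Proof. by move=> h e; apply: (cancelq h); rewrite e mul1n. Qed.

Section Orb.
Variables (T : finType) (P : {set T}) (f : T -> T).
Hypothesis injf : injective f.
Hypothesis fP : forall x, x \in P -> f x \in P.

Lemma iterP t x : x \in P -> iter t f x \in P.
Proof. by elim: t => //= t IH /IH; apply: fP. Qed.

Lemma cycle_count_card l :
  cycle_count P f l * l = #|[set x in P | order f x == l]|.
Proof.
have symf := fconnect_sym injf.
rewrite -sum1_card /cycle_count.
rewrite (partition_big (fun x => [set y in P | fconnect f x y])
   (mem [set [set y in P | fconnect f x y] | x in P & order f x == l])) /=; last first.
  move=> x xS; apply/imsetP; exists x => //; by move: xS; rewrite !inE.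
rewrite -sum_nat_const; apply: eq_bigr => O /imsetP[x0 hx0 ->].
move: hx0; rewrite inE => /andP[x0P /eqP ox0].
rewrite sum1_card -ox0 /order; apply: eq_card => x; rewrite !inE.
rewrite unfold_in /= !inE; apply/idP/idP; last first.
  case/andP=> /andP[xP _] /eqP e; have : x \in [set y in P | fconnect f x y].
    by rewrite inE connect0 xP.
  by rewrite e inE => /andP[].
move=> cx.
have xP : x \in P by rewrite -(iter_findex cx); apply: iterP.
have sc := same_connect symf cx.
rewrite xP /= (eq_card sc) eqxx /=.
by apply/eqP/setP => y; rewrite !inE sc.
Qed.
End Orb.

Import GRing.Theory.
Local Open Scope ring_scope.

Section Basics.
Variables (F : finFieldType) (n : nat) (A : 'M[F]_n.+1).
Hypothesis hA : A \in unitmx.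
Local Notation V := 'rV[F]_n.+1.
Local Notation P := (proj_points F n.+1).
Local Notation f := (proj_map A).

Definition line (v : V) : {set V} := [set a *: v | a : F].

Lemma mem_line v x : (x \in line v) = [exists a, x == a *: v].
Proof.
apply/imsetP/existsP => [[a _ ->]|[a /eqP ->]]; first by exists a.
by exists a.
Qed.

Lemma line_self v : v \in line v.
Proof. by rewrite mem_line; apply/existsP; exists 1; rewrite scale1r. Qed.

Lemma inP L : (L \in P) = [exists v, (v != 0) && (L == line v)].
Proof. by rewrite inE. Qed.

Lemma line_inP v : v != 0 -> line v \in P.
Proof. by move=> v0; rewrite inP; apply/existsP; exists v; rewrite v0 eqxx. Qed.

Lemma scale_line c v : c != 0 -> line (c *: v) = line v.
Proof.
move=> c0; apply/setP => x; rewrite !mem_line; apply/existsP/existsP => [[a /eqP ->]|[a /eqP ->]].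
  by exists (a * c); rewrite scalerA.
by exists (a / c); rewrite scalerA mulfVK.
Qed.

Lemma line_eq u v : line u = line v -> exists c, u = c *: v.
Proof.
move=> e; have := line_self u; rewrite e mem_line => /existsP[a /eqP ->].
by exists a.
Qed.

Lemma scaler_inj_vec (a b : F) (v : V) : v != 0 -> a *: v = b *: v -> a = b.
Proof.
move=> v0 /eqP; rewrite -subr_eq0 -scalerBl scaler_eq0 (negbTE v0) orbF subr_eq0.
by move/eqP.
Qed.

Lemma mulA_inj : injective (fun v : V => v *m A).
Proof. by move=> u v e; rewrite -(mulmxK hA u) e mulmxK. Qed.

Lemma f_inj : injective f.
Proof. by move=> S1 S2; rewrite /proj_map => /imset_inj; apply; apply: mulA_inj. Qed.

Lemma f_line v : f (line v) = line (v *m A).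
Proof.
apply/setP => x; rewrite /proj_map mem_line; apply/imsetP/existsP.
  by case=> y; rewrite mem_line => /existsP[a /eqP ->] ->; exists a; rewrite scalemxAl.
by case=> a /eqP ->; exists (a *: v); rewrite ?line_self ?scalemxAl //; rewrite mem_line; apply/existsP; exists a.
Qed.

Lemma iter_f_line t v : iter t f (line v) = line (v *m A ^+ t).
Proof.
elim: t => [|t IH]; first by rewrite expr0 mulmx1.
by rewrite iterS IH f_line exprSr -mulmxE mulmxA.
Qed.

Lemma mulA_neq0 (v : V) : v != 0 -> v *m A != 0.
Proof.
move=> v0; apply: contra v0 => /eqP e; apply/eqP; apply: mulA_inj.
by rewrite e mul0mx.
Qed.

Lemma mulAt_neq0 t (v : V) : v != 0 -> v *m A ^+ t != 0.
Proof.
elim: t => [|t IH] v0; first by rewrite expr0 mulmx1.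
by rewrite exprSr -mulmxE mulmxA; apply: mulA_neq0; apply: IH.
Qed.

Lemma f_P L : L \in P -> f L \in P.
Proof.
rewrite inP => /existsP[v /andP[v0 /eqP ->]]; rewrite f_line.
by apply: line_inP; apply: mulA_neq0.
Qed.

Lemma iter_P t L : L \in P -> iter t f L \in P.
Proof. by elim: t => //= t IH /IH; apply: f_P. Qed.

Lemma iter_mod_order t L : iter t f L = iter (t %% order f L)%N f L.
Proof.
rewrite {1}(divn_eq t (order f L)) addnC iterD.
suff -> : forall k, iter (k * order f L) f L = L by [].
elim=> // k IH; by rewrite mulSn iterD IH (iter_order f_inj).
Qed.

Lemma order_dvdP t L : (order f L %| t)%N = (iter t f L == L).
Proof.
rewrite iter_mod_order /dvdn; apply/eqP/eqP => [->//|e].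
have lt := ltn_pmod t (order_gt0 f L).
have := findex_iter lt; rewrite e findex0 => h; by rewrite -h.
Qed.

End Basics.

Section Count.
Variables (F : finFieldType) (n : nat).
Local Notation V := 'rV[F]_n.+1.
Local Notation P := (proj_points F n.+1).

Lemma card_line (w : V) : w != 0 -> #|line w| = #|F|.
Proof.
move=> w0; rewrite /line card_imset //.
by move=> a b; apply: scaler_inj_vec.
Qed.

Lemma card_lineD0 (w : V) : w != 0 -> #|[predD1 line w & 0]| = (#|F| - 1)%N.
Proof.
move=> w0; have := cardD1 0 (line w); rewrite card_line //.
have -> : (0 : V) \in line w by rewrite mem_line; apply/existsP; exists 0; rewrite scale0r.
move=> ->; by rewrite add1n subn1.
Qed.

Lemma count_lines (W : {vspace V}) :
  (#|[set L in P | L \subset W]| * (#|F| - 1) = #|W| - 1)%N.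
Proof.
have -> : (#|W| - 1)%N = #|[predD1 W & (0 : V)]|.
  by rewrite (cardD1 0 W) mem0v add1n subn1.
rewrite -[#|[predD1 W & 0]|]sum1_card (partition_big (fun v => line v) (mem [set L in P | L \subset W])) /=.
  rewrite -sum_nat_const; apply: eq_bigr => L.
  rewrite inE => /andP[]; rewrite inP => /existsP[w /andP[w0 /eqP ->]] sW.
  rewrite sum1_card -(card_lineD0 w0); apply: eq_card => v; rewrite !inE.
  rewrite unfold_in /=.
  change (((v != 0) && (v \in line w)) = ((v \in [predD1 W & 0]) && (line v == line w))).
  rewrite !inE; apply/idP/idP; last first.
    by case/andP=> /andP[v0 _] /eqP <-; rewrite v0 line_self.
  case/andP=> v0 vl; rewrite v0 (subsetP sW) //=.
  move: vl; rewrite mem_line => /existsP[a /eqP e]; rewrite e scale_line //.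
  by apply: contraNneq v0 => a0; rewrite e a0 scale0r.
move=> v /andP[v0 vW]; rewrite inE line_inP //=.
apply/subsetP => x; rewrite mem_line => /existsP[a /eqP ->]; exact: memvZ.
Qed.

End Count.

Section Eigen.
Variables (F : finFieldType) (n r : nat) (A : 'M[F]_n.+1).
Hypothesis hA : A \in unitmx.
Hypothesis ch2 : 2 \in [pchar F].
Hypothesis qodd : odd #|F|.-1.
Local Notation V := 'rV[F]_n.+1.
Local Notation P := (proj_points F n.+1).
Local Notation f := (proj_map A).
Hypothesis hord2 : forall L, L \in P -> iter (2 ^ r) f L = L.
Variables (x0 : V) (mu : F).
Hypothesis x00 : x0 != 0.
Hypothesis x0A : x0 *m A = mu *: x0.

Definition N := A + mu%:M.

Lemma sq_char2 (X : 'M[F]_n.+1) (c : F) : (X + c%:M) ^+ 2 = X ^+ 2 + (c ^+ 2)%:M.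
Proof.
rewrite !expr2 mulrDl !mulrDr -!mulmxE mul_mx_scalar mul_scalar_mx -scalar_mxM.
by rewrite addrA -(addrA (X *m X)) -scalerDl addrr_pchar2 // scale0r addr0.
Qed.

Lemma N_pow k : N ^+ (2 ^ k) = A ^+ (2 ^ k) + (mu ^+ (2 ^ k))%:M.
Proof.
elim: k => [|k IH]; first by rewrite !expn0 !expr1.
by rewrite expnSr !exprM IH sq_char2.
Qed.

Lemma kerN k (v : V) : (v *m N ^+ (2 ^ k) == 0) = (v *m A ^+ (2 ^ k) == mu ^+ (2 ^ k) *: v).
Proof.
rewrite N_pow mulmxDr mul_mx_scalar addr_eq0 -scaleNr oppr_pchar2 //.
Qed.

Lemma x0_pow j : x0 *m A ^+ j = mu ^+ j *: x0.
Proof.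
elim: j => [|j IH]; first by rewrite expr0 mulmx1 scale1r.
by rewrite exprSr -mulmxE mulmxA IH -scalemxAl x0A scalerA -exprSr.
Qed.

Lemma mu_neq0 : mu != 0.
Proof.
apply: contraNneq (mulA_neq0 hA x00) => m0; by rewrite x0A m0 scale0r.
Qed.

Lemma unit_pow_q1 (a : F) : a != 0 -> a ^+ #|F|.-1 = 1.
Proof.
move=> a0; apply: (mulIf a0); rewrite mul1r -exprSr prednK ?expf_card //.
by apply/card_gt0P; exists 0.
Qed.

Lemma eigen_fix k (v : V) : v != 0 -> iter (2 ^ k) f (line v) = line v ->
  v *m A ^+ (2 ^ k) = mu ^+ (2 ^ k) *: v.
Proof.
set t := (2 ^ k)%N; set mu' := mu ^+ t => v0 fix_v.
have x0t : x0 *m A ^+ t = mu' *: x0 by rewrite x0_pow.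
have sub : forall b, v = b *: x0 -> v *m A ^+ t = mu' *: v.
  by move=> b ->; rewrite -scalemxAl x0t !scalerA mulrC.
move: fix_v; rewrite iter_f_line => /line_eq[nu vt].
have nu0 : nu != 0.
  apply: contraNneq (mulAt_neq0 hA t v0) => n0; by rewrite vt n0 scale0r.
have mu'0 : mu' != 0 by rewrite expf_neq0 // mu_neq0.
have vj : forall j, v *m (A ^+ t) ^+ j = nu ^+ j *: v.
  elim=> [|j IH]; first by rewrite expr0 mulmx1 scale1r.
  by rewrite exprSr -mulmxE mulmxA IH -scalemxAl vt scalerA -exprSr.
have x0j : forall j, x0 *m (A ^+ t) ^+ j = mu' ^+ j *: x0.
  by move=> j; rewrite -exprM x0_pow exprM.
have [y0|y0] := eqVneq (v + x0) 0.
  apply: (sub (-1)); rewrite scaleN1r; apply/eqP; by rewrite -addr_eq0 y0.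
have yq : iter (t * #|F|.-1) f (line (v + x0)) = line (v + x0).
  by rewrite iter_f_line exprM mulmxDl vj x0j !unit_pow_q1 // !scale1r.
have yP := line_inP y0.
have d1 : (order f (line (v + x0)) %| t * #|F|.-1)%N by rewrite order_dvdP // yq.
have d2 : (order f (line (v + x0)) %| 2 ^ r)%N by rewrite order_dvdP // hord2.
have d3 : (order f (line (v + x0)) %| t)%N.
  case/dvdn_pfactor: d2 => // j _ ej; move: d1; rewrite ej Gauss_dvdl //.
  by rewrite coprimeXl // coprime2n.
move: d3; rewrite order_dvdP // => /eqP; rewrite iter_f_line => /line_eq[c].
rewrite mulmxDl vt x0t scalerDr => E.
have E2 : (nu - c) *: v = (c - mu') *: x0.
  apply/eqP; rewrite !scalerBl subr_eq; apply/eqP.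
  by rewrite -(addrK (mu' *: x0) (nu *: v)) E [RHS]addrC addrA.
have [nc|nc] := eqVneq nu c.
  move: E2; rewrite nc subrr scale0r => /esym/eqP; rewrite scaler_eq0 (negbTE x00) orbF.
  by rewrite subr_eq0 => /eqP <-; rewrite -nc.
rewrite -vt; apply: (sub ((c - mu') / (nu - c))).
by rewrite mulrC -scalerA -E2 scalerA mulVf ?scale1r // subr_eq0.
Qed.

End Eigen.

Section Kern.
Variables (F : finFieldType) (n r : nat) (A : 'M[F]_n.+1).
Hypothesis hA : A \in unitmx.
Hypothesis ch2 : 2 \in [pchar F].
Hypothesis qodd : odd #|F|.-1.
Local Notation V := 'rV[F]_n.+1.
Local Notation P := (proj_points F n.+1).
Local Notation f := (proj_map A).
Hypothesis hord2 : forall L, L \in P -> iter (2 ^ r) f L = L.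
Variables (x0 : V) (mu : F).
Hypothesis x00 : x0 != 0.
Hypothesis x0A : x0 *m A = mu *: x0.

Definition Z a : {vspace V} := lker (linfun (mulmxr (N A mu ^+ a))).

Lemma memZ a v : (v \in Z a) = (v *m N A mu ^+ a == 0).
Proof. by rewrite memv_ker lfunE. Qed.

Lemma fixZ k L : L \in P -> (iter (2 ^ k) f L == L) = (L \subset Z (2 ^ k)).
Proof.
rewrite inP => /existsP[v /andP[v0 /eqP ->]]; apply/idP/idP.
  move=> /eqP /(eigen_fix hA qodd hord2 x00 x0A v0) e.
  apply/subsetP => x; rewrite mem_line => /existsP[a /eqP ->].
  by apply: memvZ; rewrite memZ (kerN _ ch2) e.
move=> /subsetP /(_ v (line_self v)); rewrite memZ (kerN _ ch2) => /eqP e.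
by rewrite iter_f_line e scale_line // expf_neq0 // (mu_neq0 hA x00 x0A).
Qed.

Definition D k := \dim (Z (2 ^ k)).

Lemma Fix_count k :
  (#|[set L in P | iter (2 ^ k) f L == L]| * (#|F| - 1) = #|F| ^ D k - 1)%N.
Proof.
rewrite -card_vspace -count_lines.
have -> : [set L in P | iter (2 ^ k) f L == L] = [set L in P | L \subset Z (2 ^ k)] => //.
apply/setP => L; rewrite [in LHS]inE [in RHS]inE; case LP: (L \in P) => //=; by rewrite fixZ ?LP.
Qed.

Lemma Zmono a b : (a <= b)%N -> (Z a <= Z b)%VS.
Proof.
move=> ab; apply/subvP => v; rewrite !memZ => /eqP e.
by rewrite -(subnKC ab) exprD -mulmxE mulmxA e mul0mx.
Qed.

Lemma Dmono i j : (i <= j)%N -> (D i <= D j)%N.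
Proof. by move=> ij; apply: dimvS; apply: Zmono; rewrite leq_pexp2l. Qed.

Lemma stab_ker a : Z a = Z a.+1 -> forall b, (a <= b)%N -> (Z b <= Z a)%VS.
Proof.
move=> e b ab; apply/subvP => v; elim: b ab v => [|b IH] ab v.
  by rewrite leqn0 in ab; rewrite (eqP ab).
rewrite leq_eqVlt in ab; case/orP: ab => [/eqP -> //|ab].
rewrite memZ => /eqP vb; apply: IH => //.
have : v *m N A mu ^+ (b - a) \in Z a.+1.
  by rewrite memZ -mulmxA mulmxE -exprD addnS subnK // vb.
rewrite -e => h0; have /eqP h : (v *m N A mu ^+ (b - a)) *m N A mu ^+ a == 0 by rewrite -memZ.
have ab' : (a <= b)%N by []. 
by rewrite memZ -(subnK ab') exprD -mulmxE mulmxA h.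
Qed.

Lemma stab j : D j = D j.+1 -> forall i, (j <= i)%N -> D i = D j.
Proof.
move=> e.
have eZ : Z (2 ^ j) = Z (2 ^ j.+1).
  by apply/eqP; rewrite eqEdim Zmono ?leq_pexp2l //= /D in e *; rewrite e.
have eZ1 : Z (2 ^ j) = Z (2 ^ j).+1.
  apply/eqP; rewrite eqEdim Zmono //=; apply: dimvS; rewrite eZ Zmono //.
  by rewrite expnS mul2n -addnn -addn1 leq_add2l expn_gt0.
move=> i ji; apply/eqP; rewrite eqn_leq (Dmono ji) andbT.
by apply: dimvS; apply: (stab_ker eZ1); rewrite leq_pexp2l.
Qed.

Lemma D0 : (1 <= D 0)%N.
Proof.
rewrite lt0n dimv_eq0; apply: contraNneq x00 => e.
have : x0 \in Z (2 ^ 0) by rewrite memZ (kerN _ ch2) expn0 !expr1 x0A.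
by rewrite e memv0.
Qed.

Lemma Dle k : (D k <= n.+1)%N.
Proof.
have := dimvS (subvf (Z (2 ^ k))); by rewrite dimvf dim_matrix mul1r.

Qed.

End Kern.

Unset Implicit Arguments.

Lemma in_setP' (T : finType) (P : {set T}) (p : pred T) x :
  (x \in [set y in P | p y]) = (x \in P) && p x.
Proof. by rewrite inE. Qed.

Theorem corollary3p6 (F : finFieldType) (m n r : nat)
  (hq : #|F| = (2 ^ m)%N) (hq4 : (4 <= 2 ^ m)%N) (hn : (1 <= n)%N)
  (A : 'M[F]_(n.+1)) (hA : A \in unitmx)
  (hord : is_perm_order (proj_points F n.+1) (proj_map A) (2 ^ r)%N) :
  let c := fun i : nat => cycle_count (proj_points F n.+1) (proj_map A) (2 ^ i)%N in
  odd (c 0%N) /\ ~~ odd (\sum_(1 <= i < r.+1) c i)%N /\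
  (n = 1%N ->
     let case1 := c 0%N = (2 ^ m).+1 /\ (forall i, (1 <= i <= r)%N -> c i = 0%N) in
     let case2 := c 0%N = 1%N /\
        exists j, [/\ (1 <= j <= r)%N, (c j * 2 ^ j)%N = (2 ^ m)%N, (1 < c j)%N &
                     forall i, (1 <= i <= r)%N -> i <> j -> c i = 0%N] in
     (case1 /\ ~ case2) \/ (~ case1 /\ case2)).
Proof.
move=> c.
set P := proj_points F n.+1.
set f := proj_map A.
set q := #|F|.
have m2 : (2 <= m)%N.
  by move: hq4; case: (m) => [|[|m']].
have q1 : (1 < q)%N by rewrite /q hq; apply: leq_trans hq4.
have ch2 : 2 \in [pchar F] by apply: (card_finPcharP hq).
have qodd : odd q.-1.
  have h := oddS q.-1; rewrite prednK ?(ltnW q1) // /q hq oddX in h.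
  by rewrite /q hq -[odd _]negbK -h; case: (m) m2.
case: hord => _ [hfix hnon].
have finj : injective f by apply: f_inj.
have fP : forall L, L \in P -> f L \in P by move=> L; apply: f_P.
have ordP : forall L, L \in P -> exists2 j, (j <= r)%N & order f L = (2 ^ j)%N.
  move=> L LP; have : (order f L %| 2 ^ r)%N by rewrite order_dvdP // hfix.
  by move/(dvdn_pfactor _ _ (isT : prime 2)) => [j jr ->]; exists j.
have fixj : forall L j k, order f L = (2 ^ j)%N -> (iter (2 ^ k) f L == L) = (j <= k)%N.
  by move=> L j k oj; rewrite -order_dvdP // oj dvdn_Pexp2l.
pose a i := #|[set L in P | order f L == (2 ^ i)%N]|.
pose E k := #|[set L in P | iter (2 ^ k) f L == L]|.
have ca : forall i, (c i * 2 ^ i)%N = a i.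
  by move=> i; rewrite /c /a cycle_count_card.
have E0 : E 0%N = a 0%N.
  rewrite /E /a; apply: eq_card => L; rewrite !in_setP'.
  case LP : (L \in P) => //=; case: (ordP L LP) => j _ oj.
  by rewrite -[f L]/(iter (2^0) f L) (fixj L j) // oj eqn_exp2l // leqn0.
have ES : forall i, E i.+1 = (E i + a i.+1)%N.
  move=> i; rewrite /E /a -(cardsID [set L in P | iter (2 ^ i) f L == L]).
  congr addn; apply: eq_card => L; rewrite !(in_setI, in_setD, in_setP').
    case LP : (L \in P) => //=; case: (ordP L LP) => j _ oj.
    rewrite !(fixj L j) //; case: (leqP j i) => ji; rewrite ?andbT ?andbF //.
    exact: leqW.
  case LP : (L \in P); rewrite ?andbF //=; case: (ordP L LP) => j _ oj.
  rewrite !(fixj L j) // oj eqn_exp2l //; case: (ltngtP j i.+1) => //.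
  - by rewrite ltnS => ->.
  - by rewrite andbF.
  - by move=> ->; rewrite ltnn.
have Er : E r = #|P|.
  rewrite /E; apply: eq_card => L; rewrite in_setP'.
  by case LP : (L \in P) => //=; rewrite hfix ?LP ?eqxx.
have Pcount : (#|P| * (q - 1) = q ^ n.+1 - 1)%N.
  have := count_lines (fullv : {vspace 'rV[F]_n.+1}).
  rewrite card_vspace dimvf dim_matrix mul1r => <-.
  suff -> : #|[set L in proj_points F n.+1 | L \subset fullv]| = #|P| by [].
  apply: eq_card => L; rewrite in_setP'; case: (L \in proj_points F n.+1) => //=.
  by apply/subsetP => x _; apply: memvf.
have qeven : odd q = false by rewrite /q hq oddX; case: (m) m2.
have Podd : odd #|P|.
  have := congr1 odd Pcount; rewrite oddM oddB ?expn_gt0 ?(ltnW q1) //.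
  by rewrite qeven oddB ?expn_gt0 ?(ltnW q1) // oddX qeven /= andbT => ->.
have even_a : forall i, ~~ odd (a i.+1).
  by move=> i; rewrite -ca oddM oddX /= andbF.
have oddE : forall k, odd (E k) = odd (E 0%N).
  by elim=> // k IH; rewrite ES oddD (negbTE (even_a k)) addbF.
have E0odd : odd (E 0%N) by rewrite -(oddE r) Er.
have c0 : c 0%N = E 0%N by rewrite E0 -ca muln1.
split; first by rewrite c0.
have [L0 L0in] : exists L0, L0 \in [set L in P | iter (2 ^ 0) f L == L].
  apply/card_gt0P; move: E0odd; rewrite /E; by case: #|_|.
move: L0in; rewrite in_setP' => /andP[]; rewrite inP => /existsP[x0 /andP[x00 /eqP ->]].
rewrite expn0 /= /f f_line => /eqP /line_eq[mu x0A].
pose DD k := D A mu k.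
have Fc : forall k, (E k * (q - 1) = q ^ DD k - 1)%N.
  by move=> k; apply: (Fix_count hA ch2 qodd hfix x00 x0A k).
have DD0 : (1 <= DD 0)%N by apply: (D0 ch2 x00 x0A).
have chain : forall i, DD i.+1 <> DD i -> (i.+1 <= DD i)%N.
  move=> i ne.
  suff : forall j, (j <= i)%N -> (j.+1 <= DD j)%N by apply.
  elim=> // j IH ji.
  have IH' := IH (ltnW ji).
  have : DD j <> DD j.+1.
    move=> e; apply: ne; rewrite /DD (stab e (leqW (ltnW ji))) (stab e (ltnW ji)) //.
  move=> ne2; have := Dmono A mu (leqnSn j); rewrite -/(DD j) -/(DD j.+1).
  by rewrite leq_eqVlt => /orP[/eqP//|]; apply: leq_trans.
have key : forall i', (c i'.+1 * 2 ^ i'.+1 * (q - 1) = q ^ DD i'.+1 - q ^ DD i')%N.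
  move=> i'; rewrite ca; have := Fc i'.+1; have := Fc i'; rewrite ES mulnDl.
  have : (0 < q ^ DD i')%N by rewrite expn_gt0 ltnW.
  lia.
have ceven : forall i, (1 <= i <= r)%N -> ~~ odd (c i).
  case=> // i' _.
  case: (eqVneq (DD i'.+1) (DD i')) => e.
    have := key i'; rewrite e subnn => /eqP; rewrite !muln_eq0 expn_eq0 /= subn_eq0 leqNgt q1 /= orbF.
    by rewrite orbF => /eqP ->.
  have ch := chain i' (elimN eqP e).
  have d1 : (2 ^ (m * DD i') %| c i'.+1 * 2 ^ i'.+1)%N.
    rewrite -(@Gauss_dvdl _ _ (q - 1)).
      rewrite key /q hq -!expnM; apply: dvdn_sub => //.
      by rewrite dvdn_exp2l // leq_mul2l Dmono // orbT.
    by rewrite coprimeXl // coprime2n subn1.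
  have d2 : (2 ^ i'.+2 %| c i'.+1 * 2 ^ i'.+1)%N.
    apply: dvdn_trans d1; rewrite dvdn_exp2l //; nia.
  rewrite expnS dvdn_pmul2r ?expn_gt0 // in d2.
  by rewrite -dvdn2.
split.
  rewrite big_nat_cond; apply: (big_ind (fun x => ~~ odd x)) => //.
    by move=> x y hx hy; rewrite oddD (negbTE hx) (negbTE hy).
  by move=> i /andP[/andP[h1 h2] _]; apply: ceven; rewrite h1.
move=> n1; cbv zeta.
have DDle : forall k, (DD k <= 2)%N by move=> k; rewrite -n1; apply: Dle.
have Pq : #|P| = q.+1.
  by move: Pcount; rewrite [in (q ^ n.+1)%N]n1 expnS expn1; apply: E2.
have qm : q = (2 ^ m)%N by [].
have DDr : DD r = 2%N.
  have h1 : (q ^ DD r = q ^ 2)%N.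
    have := Fc r; rewrite Er Pq sq1 // expnS expn1.
    have : (0 < q ^ DD r)%N by rewrite expn_gt0 ltnW.
    have : (0 < q * q)%N by rewrite muln_gt0 ltnW.
    lia.
  by apply/eqP; rewrite -(eqn_exp2l _ _ q1); apply/eqP.
have Efrom2 : forall k, DD k = 2%N -> E k = q.+1.
  by move=> k dk; have := Fc k; rewrite dk expnS expn1; apply: E2.
have Efrom1 : forall k, DD k = 1%N -> E k = 1%N.
  by move=> k dk; have := Fc k; rewrite dk expn1; apply: E1.
case: (posnP r) => [r0|rpos].
  have c0q : c 0%N = q.+1 by rewrite c0 -r0 Er Pq.
  left; split.
    by split; [rewrite c0q qm | move=> i /andP[h1 h2]; move: (leq_trans h1 h2); rewrite r0].
  by case=> h _; move: h; rewrite c0q => -[e]; rewrite e in q1.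
have DD0e : DD 0%N = 1%N.
  have := DDle 0%N; rewrite leq_eqVlt => /orP[/eqP e|]; last first.
    by rewrite ltnS => h; apply/eqP; rewrite eqn_leq h DD0.
  exfalso; have E0P : E 0%N = #|P| by rewrite (Efrom2 _ e) Pq.
  have sub : [set L in P | iter (2 ^ 0) f L == L] \subset P.
    by apply/subsetP => L; rewrite in_setP' => /andP[].
  have := eqEcard [set L in P | iter (2 ^ 0) f L == L] P.
  rewrite sub -/(E 0%N) E0P leqnn => /eqP eS.
  have [|L [LP hL]] := hnon 1%N.
    by rewrite /= -[X in (X < _)%N](expn0 2) (ltn_exp2l 0 _ (isT : (1 < 2)%N)).
  move: LP; rewrite -/P -eS in_setP' expn0 => /andP[_ /eqP]; exact: hL.
have DD1e : DD 1%N = 2%N.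
  have := DDle 1%N; rewrite leq_eqVlt => /orP[/eqP //|].
  rewrite ltnS => h; exfalso.
  have e : DD 0%N = DD 1%N.
    apply/eqP; rewrite eqn_leq DD0e h andbT; exact: (leq_trans DD0 (Dmono A mu (leq0n 1))).
  by move: DDr; rewrite /DD (stab e (leq0n _)) -/(DD 0%N) DD0e.
have DDi : forall i, (1 <= i)%N -> DD i = 2%N.
  move=> i hi; apply/eqP; rewrite eqn_leq DDle -DD1e.
  exact: Dmono.
have c0e : c 0%N = 1%N by rewrite c0 Efrom1.
have c1e : (c 1%N * 2 ^ 1 = q)%N.
  by rewrite ca; have := ES 0%N; rewrite (Efrom2 _ DD1e) Efrom1 // => h; lia.
have ci0 : forall i, (2 <= i)%N -> c i = 0%N.
  case=> [|[|i]] // _; have := ES i.+1; rewrite -ca !Efrom2 ?DDi // => h.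
  have : (c i.+2 * 2 ^ i.+2 = 0)%N by lia.
  by move/eqP; rewrite muln_eq0 expn_eq0 /= orbF => /eqP.
right; split.
  case; rewrite c0e -qm => /eqP; rewrite eqSS => /eqP q0; by rewrite -q0 in q1.
split => //; exists 1%N; split.
- exact: rpos.
- by rewrite c1e.
- by move: c1e hq4; rewrite -qm expn1; lia.
- move=> i /andP[h1 _] ne; apply: ci0.
  by case: i h1 ne => [|[|i]].
Qed.
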